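(* Let $r\in\mathbb Z_n$, $1\le j\le\frac{n-1}2$, let $\mathbf w\ne0$ be a row vector with $\mathbf wZ=q^{2r}\mathbf w$, and write $\mathcal U_k=\mathcal U_k(q^j+q^{-j})$, $\mathcal L_k=\mathcal L_k(q^j+q^{-j})$. Set $\mathbf y_0=\mathbf w$, $\mathbf y_1=q^r\mathcal U_1\mathbf w+\mathbf w$, and $\mathbf y_k=q^{kr}(\mathcal U_k-\mathcal U_{k-2})\mathbf w+k\,q^{(k-1)r}\mathcal U_{k-1}\mathbf w$ for $2\le k\le n-1$. Then $\mathbf y_{j,r}=[\mathbf y_{n-1}\ \cdots\ \mathbf y_1\ \mathbf y_0]$ satisfies $$\mathbf y_{j,r}M=\lambda_{j,r}\mathbf y_{j,r}+\mathbf w_{j,r},\qquad \mathbf w_{j,r}=[q^{(n-1)r}\mathcal L_{n-1}\mathbf w\ \cdots\ q^r\mathcal L_1\mathbf w\ \ \mathbf w],$$ where $\lambda_{j,r}=q^r(q^j+q^{-j})$ and $\mathbf w_{j,r}$ is a left eigenvector of $M$ for $\lambda_{j,r}$.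
   Context: $n\ge3$ odd, $q$ a primitive $n$-th root of unity in $\mathbb C$. $I$ is the $n\times n$ identity, $Z$ the $n\times n$ cyclic permutation matrix with $(Zu)_i=u_{i+1}$ (indices mod $n$). $M$ is the $n^2\times n^2$ block matrix of $n\times n$ blocks $M_{ab}$ ($0\le a,b\le n-1$) with $M_{a,a+1}=I$ ($0\le a\le n-2$), $M_{a,a-1}=Z$ ($1\le a\le n-2$), $M_{n-1,0}=2I$, $M_{n-1,n-2}=2Z$, other blocks zero; row vectors of length $n^2$ are written as $n$ blocks matching this structure. $\mathcal U_k$: $\mathcal U_0=1$, $\mathcal U_1=t$, $\mathcal U_k=t\mathcal U_{k-1}-\mathcal U_{k-2}$. $\mathcal L_k$: $\mathcal L_0=2$, $\mathcal L_1=t$, $\mathcal L_k=t\mathcal L_{k-1}-\mathcal L_{k-2}$. *)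

(* Defs.v *)
From HB Require Import structures.
From mathcomp Require Import all_boot all_order all_algebra.
Unset Printing Implicit Defensive.
Import Order.TTheory GRing.Theory Num.Theory.
Local Open Scope ring_scope.

Fixpoint chebU {C : pzRingType} (k : nat) (t : C) : C :=
  match k with
  | 0 => 1
  | 1 => t
  | (k'.+1 as k1).+1 => t * chebU k1 t - chebU k' t
  end.

Fixpoint chebL {C : pzRingType} (k : nat) (t : C) : C :=
  match k with
  | 0 => 2%:R
  | 1 => t
  | (k'.+1 as k1).+1 => t * chebL k1 t - chebL k' t
  end.

(* Entries (row i, column c, 0-based nat indices) of the n x n identity
   and of the cyclic matrix Z with (Zu)_i = u_{i+1 mod n}, i.e. Z_{i,c} = [c = i+1 mod n]. *)
Definition Ient {C : pzRingType} (i c : nat) : C := (i == c)%:R.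
Definition Zent {C : pzRingType} (n i c : nat) : C := ((i.+1 %% n)%N == c)%:R.

Definition Zmx {C : pzRingType} (n : nat) : 'M[C]_n :=
  \matrix_(i < n, c < n) Zent n i c.

Definition Mblk {C : pzRingType} (n a b i c : nat) : C :=
  if (b == a.+1) && (a <= n - 2)%N then Ient i c
  else if [&& (1 <= a)%N, (a <= n - 2)%N & a == b.+1] then Zent n i c
  else if (a == n.-1) && (b == 0%N) then 2%:R * Ient i c
  else if (a == n.-1) && (b == n - 2)%N then 2%:R * Zent n i c
  else 0.

(* The n^2 x n^2 matrix M; global index k corresponds to block k / n, position k mod n
   (this agrees with mxvec_index i j = i * n + j). *)
Definition Mmx {C : pzRingType} (n : nat) : 'M[C]_(n * n) :=
  \matrix_(k < n * n, l < n * n) Mblk n (k %/ n)%N (l %/ n)%N (k %% n)%N (l %% n)%N.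

Definition blockrow {C : pzRingType} (n : nat) (B : nat -> 'rV[C]_n) : 'rV[C]_(n * n) :=
  mxvec (\matrix_(a < n, i < n) B a 0 i).

Definition yvec {C : unitRingType} (n j r : nat) (q : C) (w : 'rV[C]_n) (k : nat)
  : 'rV[C]_n :=
  let t := q ^+ j + q ^- j in
  match k with
  | 0 => w
  | 1 => (q ^+ r * chebU 1 t) *: w + w
  | k'.+1 => (q ^+ (k * r)%N * (chebU k t - chebU (k - 2)%N t)) *: w
             + (k%:R * q ^+ (k' * r)%N * chebU k' t) *: w
  end.

Definition yjr {C : unitRingType} (n j r : nat) (q : C) (w : 'rV[C]_n) : 'rV[C]_(n * n) :=
  blockrow n (fun a => yvec n j r q w (n.-1 - a)%N).

(* w_{j,r} = [q^{(n-1)r} L_{n-1} w ... q^r L_1 w  w]; block for index k >= 1 is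
   q^{kr} L_k w, and the last block (k = 0) is w itself (not L_0 w = 2w). *)
Definition wblk {C : unitRingType} (n j r : nat) (q : C) (w : 'rV[C]_n) (k : nat)
  : 'rV[C]_n :=
  match k with
  | 0 => w
  | _ => (q ^+ (k * r)%N * chebL k (q ^+ j + q ^- j)) *: w
  end.

Definition wjr {C : unitRingType} (n j r : nat) (q : C) (w : 'rV[C]_n) : 'rV[C]_(n * n) :=
  blockrow n (fun a => wblk n j r q w (n.-1 - a)%N).

(* Main.v *)
Set Warnings "-all".
Require Import Defs.
From HB Require Import structures.
From mathcomp Require Import all_boot all_order all_algebra.
From mathcomp Require Import zify ring lra.
Import Order.TTheory GRing.Theory Num.Theory.
Local Open Scope ring_scope.

Lemma index_allpairs (T1 T2 : eqType) (s1 : seq T1) (s2 : seq T2) x1 x2 :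
  x1 \in s1 -> x2 \in s2 ->
  index (x1, x2) [seq (y1, y2) | y1 <- s1, y2 <- s2] = (index x1 s1 * size s2 + index x2 s2)%N.
Proof.
move=> + h2; elim: s1 => [|y s1 IH] //= h1.
rewrite index_cat; case: eqVneq => [<-|ne].
  have inj : injective (pair y : T2 -> T1 * T2) by move=> a b [].
  by rewrite mem_map // h2 index_map // mul0n.
have -> : (x1, x2) \in [seq (y, y2) | y2 <- s2] = false.
  by apply/negbTE/mapP => -[z _ [e _]]; move: ne; rewrite e eqxx.
rewrite size_map IH; last by move: h1; rewrite inE eq_sym (negbTE ne).
by rewrite mulSn addnA.
Qed.

Lemma val_mxvec_index m n (i : 'I_m) (j : 'I_n) : (mxvec_index i j : nat) = (i * n + j)%N.
Proof.
rewrite /mxvec_index /=.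
have -> : (enum_rank (i, j) : nat) = index (i, j) (enum {: 'I_m * 'I_n}).
  by rewrite -{2}[(i, j)](nth_enum_rank (i, j)) index_uniq ?enum_uniq // -cardE.
have -> : enum {: 'I_m * 'I_n} = [seq (x1, x2) | x1 <- enum 'I_m, x2 <- enum 'I_n].
  by rewrite enumT unlock.
by rewrite index_allpairs ?mem_enum // !index_enum_ord size_enum_ord.
Qed.

Lemma mxvec_div n (a c : 'I_n) : ((mxvec_index a c : nat) %/ n)%N = a.
Proof.
have hn : (0 < n)%N by case: n a c => [[]|].
by rewrite val_mxvec_index divnMDl // divn_small ?addn0.
Qed.

Lemma mxvec_mod n (a c : 'I_n) : ((mxvec_index a c : nat) %% n)%N = c.
Proof. by rewrite val_mxvec_index modnMDl modn_small. Qed.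

Lemma blockrowE (C : pzRingType) n (B : nat -> 'rV[C]_n) (a i : 'I_n) :
  blockrow n B 0 (mxvec_index a i) = B a 0 i.
Proof. by rewrite /blockrow mxvecE mxE. Qed.

Lemma eq_blockrow (C : pzRingType) n (B1 B2 : nat -> 'rV[C]_n) :
  (forall a : 'I_n, B1 a = B2 a) -> blockrow n B1 = blockrow n B2.
Proof. by move=> h; rewrite /blockrow; congr mxvec; apply/matrixP => a i; rewrite !mxE h. Qed.

Definition sc {C : pzRingType} (n : nat) (z : C) (a b : nat) : C :=
  if (b == a.+1) && (a <= n - 2)%N then 1
  else if [&& (1 <= a)%N, (a <= n - 2)%N & a == b.+1] then z
  else if (a == n.-1) && (b == 0%N) then 2%:R
  else if (a == n.-1) && (b == n - 2)%N then 2%:R * z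
  else 0.

Lemma sumI (C : comRingType) n (w : 'rV[C]_n) (i : 'I_n) :
  \sum_(c < n) w 0 c * Ient c i = w 0 i.
Proof.
rewrite (bigD1 i) //= /Ient eqxx mulr1 big1 ?addr0 // => c /negbTE h.
by rewrite -[(c : nat) == i]/(c == i) h mulr0.
Qed.

Lemma sumZ (C : comRingType) n (w : 'rV[C]_n) (z : C) (hwZ : w *m Zmx n = z *: w) (i : 'I_n) :
  \sum_(c < n) w 0 c * Zent n c i = z * w 0 i.
Proof.
transitivity ((w *m Zmx n) 0 i); first by rewrite mxE; apply: eq_bigr => c _; rewrite mxE.
by rewrite hwZ mxE.
Qed.

Lemma sumMblk (C : comRingType) n (w : 'rV[C]_n) (z : C) (hwZ : w *m Zmx n = z *: w)
   (a b : nat) (i : 'I_n) :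
  \sum_(c < n) w 0 c * Mblk n a b c i = sc n z a b * w 0 i.
Proof.
rewrite /Mblk /sc.
case: ifP => _; first by rewrite sumI mul1r.
case: ifP => _; first by rewrite (sumZ _ _ _ _ hwZ).
case: ifP => _.
  by under eq_bigr => c _ do rewrite mulrCA; rewrite -mulr_sumr sumI.
case: ifP => _.
  by under eq_bigr => c _ do rewrite mulrCA; rewrite -mulr_sumr (sumZ _ _ _ _ hwZ) mulrA.
by rewrite big1 ?mul0r // => c _; rewrite mulr0.
Qed.

Lemma mulBR (C : comRingType) n (w : 'rV[C]_n) (z : C) (hwZ : w *m Zmx n = z *: w)
  (f : nat -> C) :
  blockrow n (fun a => f a *: w) *m Mmx n =
  blockrow n (fun b => (\sum_(a < n) f a * sc n z a b) *: w).
Proof.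
apply/rowP => l; case/mxvec_indexP: l => b i.
rewrite blockrowE !mxE.
rewrite (reindex _ (curry_mxvec_bij _ _)) /=.
symmetry; rewrite mulr_suml.
transitivity (\sum_(a < n) \sum_(c < n) (blockrow n (fun a : nat => f a *: w) 0 (mxvec_index a c) *
     Mmx n (mxvec_index a c) (mxvec_index b i))); last first.
  by rewrite pair_bigA; apply: eq_bigr => -[a c] _.
apply: eq_bigr => a _.
under eq_bigr => c _ do rewrite blockrowE /Mmx !mxE !mxvec_div !mxvec_mod -mulrA.
by rewrite -mulr_sumr (sumMblk _ _ _ _ hwZ) mulrA.
Qed.
Lemma sum_if (C : pzRingType) n (F : nat -> C) (P : nat -> bool) m c :
  (m < n)%N -> (forall a, (a < n)%N -> P a = (a == m)) ->
  \sum_(a < n) F a * (if P a then c else 0) = F m * c.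
Proof.
move=> hm hP; rewrite (bigD1 (Ordinal hm)) //= hP // eqxx big1 ?addr0 // => a ha.
rewrite hP //; have/negbTE-> : (a : nat) != m by apply: contra ha => /eqP e; apply/eqP/val_inj.
by rewrite mulr0.
Qed.

Lemma sum_if0 (C : pzRingType) n (F : nat -> C) (P : nat -> bool) c :
  (forall a, (a < n)%N -> P a = false) ->
  \sum_(a < n) F a * (if P a then c else 0) = 0.
Proof. by move=> hP; rewrite big1 // => a _; rewrite hP // mulr0. Qed.

Lemma sc_split (C : pzRingType) n (z : C) a b : (3 <= n)%N ->
  sc n z a b = (if (b == a.+1) && (a <= n - 2)%N then 1 else 0)
  + (if [&& (1 <= a)%N, (a <= n - 2)%N & a == b.+1] then z else 0)
  + (if (a == n.-1) && (b == 0%N) then 2%:R else 0)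
  + (if (a == n.-1) && (b == n - 2)%N then 2%:R * z else 0).
Proof.
move=> hn; rewrite /sc.
case: ifP => h1; case: ifP => h2; case: ifP => h3; case: ifP => h4;
  rewrite ?addr0 ?add0r //; exfalso; lia.
Qed.

Lemma sum_sc (C : comRingType) n (z : C) (f : nat -> C) (b : nat) : (3 <= n)%N -> (b < n)%N ->
 \sum_(a < n) f a * sc n z a b =
   (if (1 <= b)%N then f b.-1 else 0) + (if (b <= n - 3)%N then z * f b.+1 else 0)
 + (if b == 0%N then 2%:R * f n.-1 else 0) + (if b == (n - 2)%N then 2%:R * z * f n.-1 else 0).
Proof.
move=> hn hb.
under eq_bigr => a _ do rewrite sc_split // !mulrDr.
rewrite !big_split /=.
congr (_ + _ + _ + _).
- case: (leqP 1 b) => hb1.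
    rewrite (@sum_if _ n f (fun a : nat => (b == a.+1) && (a <= n - 2)%N) b.-1 1) ?mulr1 //; first lia.
    by move=> a ha; apply/idP/idP => h; lia.
  by rewrite (@sum_if0 _ n f (fun a : nat => (b == a.+1) && (a <= n - 2)%N)) // => a ha; apply/negP => h; lia.
- case: (leqP b (n - 3)) => hb1.
    rewrite (@sum_if _ n f (fun a : nat => [&& (1 <= a)%N, (a <= n - 2)%N & a == b.+1]) b.+1 z) 1?mulrC //; first lia.
    by move=> a ha; apply/idP/idP => h; lia.
  by rewrite (@sum_if0 _ n f (fun a : nat => [&& (1 <= a)%N, (a <= n - 2)%N & a == b.+1])) // => a ha; apply/negP => h; lia.
- have [hb1|hb1] : (b == 0%N) \/ (b != 0%N) by lia.
    rewrite [in RHS]hb1 (@sum_if _ n f (fun a : nat => (a == n.-1) && (b == 0%N)) n.-1 2%:R) 1?mulrC //; first lia.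
    by move=> a ha; apply/idP/idP => h; lia.
  by rewrite [in RHS](negbTE hb1) (@sum_if0 _ n f (fun a : nat => (a == n.-1) && (b == 0%N))) // => a ha; apply/negP => h; lia.
- have [hb1|hb1] : (b == (n - 2)%N) \/ (b != (n - 2)%N) by lia.
    rewrite [in RHS]hb1 (@sum_if _ n f (fun a : nat => (a == n.-1) && (b == (n - 2)%N)) n.-1 (2%:R * z)) 1?mulrC //; first lia.
    by move=> a ha; apply/idP/idP => h; lia.
  by rewrite [in RHS](negbTE hb1) (@sum_if0 _ n f (fun a : nat => (a == n.-1) && (b == (n - 2)%N))) // => a ha; apply/negP => h; lia.
Qed.
Lemma chebUSS (C : pzRingType) k (t : C) : chebU k.+2 t = t * chebU k.+1 t - chebU k t.
Proof. by []. Qed.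
Lemma chebLSS (C : pzRingType) k (t : C) : chebL k.+2 t = t * chebL k.+1 t - chebL k t.
Proof. by []. Qed.

Lemma chebL_U (C : comRingType) k (t : C) : chebL k.+2 t = chebU k.+2 t - chebU k t.
Proof.
suff: chebL k.+2 t = chebU k.+2 t - chebU k t /\ chebL k.+3 t = chebU k.+3 t - chebU k.+1 t by case.
elim: k => [|k [IH1 IH2]].
  by rewrite !chebLSS !chebUSS /=; split; ring.
split => //; rewrite chebLSS IH2 IH1 !chebUSS; ring.
Qed.

Lemma two_ind (P : nat -> Prop) : P 0%N -> P 1%N -> (forall k, P k -> P k.+1 -> P k.+2) -> forall k, P k.
Proof.
move=> h0 h1 hS k; suff: P k /\ P k.+1 by case.
by elim: k => [|k [IH1 IH2]]; split => //; apply: hS.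
Qed.

Lemma chebL_closed (C : fieldType) (x : C) k : x != 0 ->
  chebL k (x + x^-1) = x ^+ k + x ^- k.
Proof.
move=> hx; elim/two_ind: k => [|| k IH1 IH2].
- by rewrite /= expr0 invr1.
- by rewrite /= expr1.
rewrite chebLSS IH1 IH2.
have xy : x * x^-1 = 1 by rewrite mulfV.
rewrite -!exprVn.
apply/eqP; rewrite -subr_eq0; apply/eqP.
transitivity ((x * x^-1 - 1) * (x ^+ k + x^-1 ^+ k)); last by rewrite xy subrr mul0r.
rewrite !exprS; ring.
Qed.

Lemma chebU_closed (C : fieldType) (x : C) k : x != 0 ->
  chebU k (x + x^-1) * (x - x^-1) = x ^+ k.+1 - x ^- k.+1.
Proof.
move=> hx; elim/two_ind: k => [|| k IH1 IH2].
- by rewrite /= mul1r expr1.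
- have xy : x * x^-1 = 1 by rewrite mulfV.
  rewrite /= -[x ^- 2]exprVn.
  apply/eqP; rewrite -subr_eq0; apply/eqP.
  transitivity ((x * x^-1 - 1) * 0); last by rewrite xy subrr mul0r.
  rewrite !exprS; ring.
rewrite chebUSS mulrBl -mulrA IH1 IH2.
have xy : x * x^-1 = 1 by rewrite mulfV.
rewrite -!exprVn.
apply/eqP; rewrite -subr_eq0; apply/eqP.
transitivity ((x * x^-1 - 1) * (x ^+ k.+1 - x^-1 ^+ k.+1)); last by rewrite xy subrr mul0r.
rewrite !exprS; ring.
Qed.

Definition cyS {C : pzRingType} (t mu : C) (k : nat) : C :=
  match k with
  | 0 => 1
  | 1 => mu * chebU 1 t + 1
  | k'.+1 => mu ^+ k * (chebU k t - chebU (k - 2)%N t) + k%:R * mu ^+ k' * chebU k' t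
  end.

Definition cwS {C : pzRingType} (t mu : C) (k : nat) : C :=
  match k with
  | 0 => 1
  | _ => mu ^+ k * chebL k t
  end.

Section Scal.
Variables (C : comRingType) (t mu : C).

Lemma S0 : cyS t mu 1 = mu * t * cyS t mu 0 + cwS t mu 0.
Proof. by rewrite /=; ring. Qed.

Lemma S1 : cyS t mu 2 = mu * t * cyS t mu 1 + cwS t mu 1 - 2%:R * mu ^+ 2 * cyS t mu 0.
Proof. rewrite /=; ring. Qed.

Lemma Sm m : cyS t mu m.+3 = mu * t * cyS t mu m.+2 + cwS t mu m.+2 - mu ^+ 2 * cyS t mu m.+1.
Proof.
case: m => [|m].
  rewrite /=; ring.
rewrite /cyS /cwS !subSS !subn0 chebL_U.
rewrite !(chebUSS _ m.+2) !(chebUSS _ m.+1) !(chebUSS _ m).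
rewrite !exprS; ring.
Qed.

Lemma Slast m : mu ^+ m.+3 = 1 -> chebL m.+3 t = 2%:R -> chebU m.+2 t = 0 ->
  mu ^+ 2 * cyS t mu m.+1 + 2%:R * cyS t mu 0 = mu * t * cyS t mu m.+2 + cwS t mu m.+2.
Proof.
move=> hmu hL hU.
have e3 : cyS t mu m.+3 = 2%:R.
  rewrite /cyS !subSS subn0 hU mulr0 addr0 -chebL_U hL.
  by rewrite hmu mul1r.
rewrite [cyS t mu 0]/cyS mulr1 -e3 Sm; ring.
Qed.

Lemma W0 : cwS t mu 1 = mu * t * cwS t mu 0.
Proof. by rewrite /=; ring. Qed.

Lemma W1 : cwS t mu 2 + 2%:R * mu ^+ 2 * cwS t mu 0 = mu * t * cwS t mu 1.
Proof. by rewrite /=; ring. Qed.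

Lemma Wm m : cwS t mu m.+3 + mu ^+ 2 * cwS t mu m.+1 = mu * t * cwS t mu m.+2.
Proof. rewrite /cwS chebLSS !exprS expr0. move: (chebL m.+2 t) (chebL m.+1 t) (mu ^+ m) => A B D; ring. Qed.

Lemma Wlast m : mu ^+ m.+3 = 1 -> chebL m.+3 t = 2%:R ->
  mu ^+ 2 * cwS t mu m.+1 + 2%:R * cwS t mu 0 = mu * t * cwS t mu m.+2.
Proof.
move=> hmu hL.
have e : mu * t * cwS t mu m.+2 = mu ^+ m.+3 * chebL m.+3 t + mu ^+ 2 * cwS t mu m.+1.
  by rewrite /cwS (chebLSS _ m.+1) !exprS; ring.
by rewrite e hmu hL /=; ring.
Qed.
End Scal.
Lemma comb (C : comRingType) n (w : 'rV[C]_n) (lam : C) (f g : nat -> C) :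
  lam *: blockrow n (fun a => f a *: w) + blockrow n (fun a => g a *: w)
  = blockrow n (fun a => (lam * f a + g a) *: w).
Proof.
apply/rowP => l; case/mxvec_indexP: l => a i.
by rewrite !mxE !blockrowE !mxE mulrDl mulrA.
Qed.

Lemma combZ (C : comRingType) n (w : 'rV[C]_n) (lam : C) (f : nat -> C) :
  lam *: blockrow n (fun a => f a *: w) = blockrow n (fun a => (lam * f a) *: w).
Proof.
apply/rowP => l; case/mxvec_indexP: l => a i.
by rewrite !mxE !blockrowE !mxE mulrA.
Qed.

Theorem mainTheorem17 (C : numClosedFieldType) (n : nat) (q : C)
  (hn3 : (3 <= n)%N) (hodd : odd n) (hq : n.-primitive_root q)
  (r : 'I_n) (j : nat) (hj1 : (1 <= j)%N) (hj2 : (j <= n.-1./2)%N)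
  (w : 'rV[C]_n) (hw0 : w != 0) (hwZ : w *m Zmx n = q ^+ (2 * r)%N *: w) :
  let lam := q ^+ r * (q ^+ j + q ^- j) in
  yjr n j r q w *m Mmx n = lam *: yjr n j r q w + wjr n j r q w
  /\ (wjr n j r q w != 0 /\ wjr n j r q w *m Mmx n = lam *: wjr n j r q w).
Proof.
move=> lam.
have qn : q ^+ n = 1 := prim_expr_order hq.
have hq0 : q != 0.
  apply/eqP => h; move: qn; rewrite h expr0n (_ : (n == 0%N) = false); last lia.
  by move/esym/eqP; rewrite oner_eq0.
have hmun : (q ^+ r) ^+ n = 1 by rewrite -exprM mulnC exprM qn expr1n.
have hz : q ^+ (2 * r) = (q ^+ r) ^+ 2 by rewrite -exprM mulnC.
have hx0 : q ^+ j != 0 by rewrite expf_neq0.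
have hxn : (q ^+ j) ^+ n = 1 by rewrite -exprM mulnC exprM qn expr1n.
have hL : chebL n (q ^+ j + q ^- j) = 2%:R.
  by rewrite chebL_closed // hxn invr1.
have hd : q ^+ j - q ^- j != 0.
  apply/eqP => h.
  have : q ^+ j * (q ^+ j - q ^- j) = 0 by rewrite h mulr0.
  rewrite mulrBr mulfV // => /eqP; rewrite subr_eq0 -exprD -(prim_order_dvd hq).
  move/dvdn_leq; rewrite addn_gt0 hj1 => /(_ isT) => h2; lia.
have hU : chebU n.-1 (q ^+ j + q ^- j) = 0.
  have := @chebU_closed _ (q ^+ j) n.-1 hx0; rewrite prednK; last lia.
  rewrite hxn invr1 subrr => /eqP; rewrite mulf_eq0 (negbTE hd) orbF => /eqP //.
have yE k : yvec n j r q w k = cyS (q ^+ j + q ^- j) (q ^+ r) k *: w.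
  case: k => [|[|k]]; rewrite /yvec /cyS ?scale1r ?scalerDl ?scale1r // -!exprM.
  by rewrite !(mulnC r).
have wE k : wblk n j r q w k = cwS (q ^+ j + q ^- j) (q ^+ r) k *: w.
  by case: k => [|k]; rewrite /wblk /cwS ?scale1r // -exprM mulnC.
have yjrE : yjr n j r q w = blockrow n (fun a => cyS (q ^+ j + q ^- j) (q ^+ r) (n.-1 - a) *: w).
  by apply: eq_blockrow => a; exact: yE.
have wjrE : wjr n j r q w = blockrow n (fun a => cwS (q ^+ j + q ^- j) (q ^+ r) (n.-1 - a) *: w).
  by apply: eq_blockrow => a; exact: wE.
have hm3 : (n - 3).+3 = n by lia.
have hmu3 : (q ^+ r) ^+ (n - 3).+3 = 1 by rewrite hm3.
have hL3 : chebL (n - 3).+3 (q ^+ j + q ^- j) = 2%:R by rewrite hm3.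
have hU3 : chebU (n - 3).+2 (q ^+ j + q ^- j) = 0 by rewrite (_ : (n - 3).+2 = n.-1) //; lia.
split.
  rewrite yjrE wjrE (mulBR _ _ _ _ hwZ) comb; apply: eq_blockrow => b; congr (_ *: _).
  have hb := ltn_ord b.
  rewrite (@sum_sc _ n _ (fun a => cyS (q ^+ j + q ^- j) (q ^+ r) (n.-1 - a)) b) // hz /lam.
  have [e|ne1] : (b : nat) = n.-1 \/ (b : nat) <> n.-1 by lia.
    have -> : (1 <= b)%N = true by lia.
    have -> : (b <= n - 3)%N = false by lia.
    have -> : ((b : nat) == 0%N) = false by lia.
    have -> : ((b : nat) == (n - 2)%N) = false by lia.
    have -> : (n.-1 - b.-1)%N = 1%N by lia.
    have -> : (n.-1 - b)%N = 0%N by lia.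
    by rewrite !addr0 S0.
  have [e|ne2] : (b : nat) = (n - 2)%N \/ (b : nat) <> (n - 2)%N by lia.
    have -> : (1 <= b)%N = true by lia.
    have -> : (b <= n - 3)%N = false by lia.
    have -> : ((b : nat) == 0%N) = false by lia.
    have -> : ((b : nat) == (n - 2)%N) = true by lia.
    have -> : (n.-1 - b.-1)%N = 2%N by lia.
    have -> : (n.-1 - b)%N = 1%N by lia.
    have -> : (n.-1 - n.-1)%N = 0%N by lia.
    rewrite S1; ring.
  have [e|ne3] : (b : nat) = 0%N \/ (b : nat) <> 0%N by lia.
    have -> : (1 <= b)%N = false by lia.
    have -> : (b <= n - 3)%N = true by lia.
    have -> : ((b : nat) == 0%N) = true by lia.
    have -> : ((b : nat) == (n - 2)%N) = false by lia.
    have -> : (n.-1 - b.+1)%N = (n - 3).+1 by lia.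
    have -> : (n.-1 - b)%N = (n - 3).+2 by lia.
    have -> : (n.-1 - n.-1)%N = 0%N by lia.
    rewrite add0r addr0 Slast //.
  have -> : (1 <= b)%N = true by lia.
  have -> : (b <= n - 3)%N = true by lia.
  have -> : ((b : nat) == 0%N) = false by lia.
  have -> : ((b : nat) == (n - 2)%N) = false by lia.
  have [m hm] : exists m, (n.-1 - b)%N = m.+2 by exists (n.-1 - b - 2)%N; lia.
  have -> : (n.-1 - b.-1)%N = m.+3 by lia.
  have -> : (n.-1 - b.+1)%N = m.+1 by lia.
  rewrite hm.
  rewrite !addr0 Sm; ring.
split.
  apply/negP => /eqP h; move/eqP: hw0; apply; apply/rowP => i.
  have hn1 : (n.-1 < n)%N by lia.
  have := congr1 (fun M : 'rV[C]_(n * n) => M 0 (mxvec_index (Ordinal hn1) i)) h.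
  by rewrite /= blockrowE !mxE subnn.
rewrite wjrE (mulBR _ _ _ _ hwZ) combZ; apply: eq_blockrow => b; congr (_ *: _).
have hb := ltn_ord b.
rewrite (@sum_sc _ n _ (fun a => cwS (q ^+ j + q ^- j) (q ^+ r) (n.-1 - a)) b) // hz /lam.
have [e|ne1] : (b : nat) = n.-1 \/ (b : nat) <> n.-1 by lia.
  have -> : (1 <= b)%N = true by lia.
  have -> : (b <= n - 3)%N = false by lia.
  have -> : ((b : nat) == 0%N) = false by lia.
  have -> : ((b : nat) == (n - 2)%N) = false by lia.
  have -> : (n.-1 - b.-1)%N = 1%N by lia.
  have -> : (n.-1 - b)%N = 0%N by lia.
  by rewrite !addr0 W0.
have [e|ne2] : (b : nat) = (n - 2)%N \/ (b : nat) <> (n - 2)%N by lia.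
  have -> : (1 <= b)%N = true by lia.
  have -> : (b <= n - 3)%N = false by lia.
  have -> : ((b : nat) == 0%N) = false by lia.
  have -> : ((b : nat) == (n - 2)%N) = true by lia.
  have -> : (n.-1 - b.-1)%N = 2%N by lia.
  have -> : (n.-1 - b)%N = 1%N by lia.
  have -> : (n.-1 - n.-1)%N = 0%N by lia.
  rewrite !addr0 -W1; ring.
have [e|ne3] : (b : nat) = 0%N \/ (b : nat) <> 0%N by lia.
  have -> : (1 <= b)%N = false by lia.
  have -> : (b <= n - 3)%N = true by lia.
  have -> : ((b : nat) == 0%N) = true by lia.
  have -> : ((b : nat) == (n - 2)%N) = false by lia.
  have -> : (n.-1 - b.+1)%N = (n - 3).+1 by lia.
  have -> : (n.-1 - b)%N = (n - 3).+2 by lia.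
  have -> : (n.-1 - n.-1)%N = 0%N by lia.
  rewrite add0r addr0 Wlast //.
have -> : (1 <= b)%N = true by lia.
have -> : (b <= n - 3)%N = true by lia.
have -> : ((b : nat) == 0%N) = false by lia.
have -> : ((b : nat) == (n - 2)%N) = false by lia.
have [m hm] : exists m, (n.-1 - b)%N = m.+2 by exists (n.-1 - b - 2)%N; lia.
have -> : (n.-1 - b.-1)%N = m.+3 by lia.
have -> : (n.-1 - b.+1)%N = m.+1 by lia.
rewrite hm.
rewrite !addr0 -Wm; ring.
Qed.
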